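(* Let $\mathcal{H}$ be an $n$-dimensional (real or complex) Hilbert space, let $(F,G)$ be an $(N,n)$ dual pair in $\mathcal{H}$, let $U$ be a unitary operator on $\mathcal{H}$, and let $\{q_i\}_{i=1}^N$ be the weight number sequence associated with a probability sequence $\{p_i\}_{i=1}^N$. Then $(F,G)\in\zeta_P^{(1)}$ if and only if $(UF,UG)\in\zeta_P^{(1)}$, where $UF=\{Uf_i\}_{i=1}^N$, $UG=\{Ug_i\}_{i=1}^N$.
   Context: A finite sequence $F=\{f_i\}_{i=1}^N$ in $\mathcal{H}$ is a frame if there are $A,B>0$ with $A\|f\|^2\le\sum_{i=1}^N|\langle f,f_i\rangle|^2\le B\|f\|^2$ for all $f$. A frame $G=\{g_i\}_{i=1}^N$ is a dual of $F$ if $f=\sum_i\langle f,f_i\rangle g_i=\sum_i\langle f,g_i\rangle f_i$ for all $f$; then $(F,G)$ is an $(N,n)$ dual pair. A probability sequence is $\{p_i\}_{i=1}^N$ with $0\le p_i\le1$, $\sum p_i=1$; weight numbers $q_i=\frac{\sum_{j} p_j}{\sum_{j} p_j-p_i}\cdot\frac{N-1}{n}$. For $\Lambda\subseteq\{1,\dots,N\}$ the error operator is $E_{\Lambda,(F,G)}f=\sum_{i\in\Lambda}q_i\langle f,f_i\rangle g_i$, and $\mathcal{A}_P^{(1)}(F,G)=\max_{|\Lambda|=1}\frac{\|E_{\Lambda,(F,G)}\|+\rho(E_{\Lambda,(F,G)})}{2}$ (operator norm and spectral radius). Let $\mathcal{A}_P^{(1)}=\inf\{\mathcal{A}_P^{(1)}(F,G):(F,G)\text{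 an }(N,n)\text{ dual pair in }\mathcal{H}\}$. A dual pair is a 1-erasure PASOD-pair if $\mathcal{A}_P^{(1)}(F,G)=\mathcal{A}_P^{(1)}$; $\zeta_P^{(1)}$ is the set of such pairs. *)

(* Defs.v *)
From HB Require Import structures.
From mathcomp Require Import all_boot all_order all_algebra.
From mathcomp Require Import classical_sets boolp reals.
From mathcomp Require Import complex.
Set Implicit Arguments. Unset Strict Implicit. Unset Printing Implicit Defensive.
Import Order.TTheory GRing.Theory Num.Theory.
Local Open Scope ring_scope.
Local Open Scope classical_set_scope.

Section FrameDefs.
Variables (R : realType) (n N : nat).
(* [isreal = true]  : H is the real Hilbert space R^n, realised inside C^n as
                      the vectors with real coordinates;
   [isreal = false] : H is the complex Hilbert space C^n. *)
Variable isreal : bool.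

Definition vec := 'cV[R[i]]_n.

Definition inH (v : vec) : Prop := isreal -> forall j, complex.Im (v j 0) = 0.

Definition dotp (u v : vec) : R[i] := \sum_(j < n) u j 0 * conjc (v j 0).

Definition vnorm (v : vec) : R := Num.sqrt (\sum_(j < n) ComplexField.Normc.normc (v j 0) ^+ 2).

Definition adj {m k} (A : 'M[R[i]]_(m, k)) : 'M[R[i]]_(k, m) := map_mx conjc A^T.

Definition opnorm (A : 'M[R[i]]_n) : R :=
  sup [set vnorm (A *m x) | x in [set x : vec | inH x /\ vnorm x = 1]].

Definition specrad (A : 'M[R[i]]_n) : R :=
  sup [set ComplexField.Normc.normc l | l in [set l : R[i] | eigenvalue A l]].

Definition is_frame (F : 'I_N -> vec) : Prop :=
  (forall i, inH (F i)) /\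
  exists A B : R, 0 < A /\ 0 < B /\
    forall f : vec, inH f ->
      A * vnorm f ^+ 2 <= \sum_(i < N) ComplexField.Normc.normc (dotp f (F i)) ^+ 2 /\
      \sum_(i < N) ComplexField.Normc.normc (dotp f (F i)) ^+ 2 <= B * vnorm f ^+ 2.

Definition is_dual (F G : 'I_N -> vec) : Prop :=
  is_frame G /\
  forall f : vec, inH f ->
    f = \sum_(i < N) dotp f (F i) *: G i /\ f = \sum_(i < N) dotp f (G i) *: F i.

Definition dual_pair (F G : 'I_N -> vec) : Prop := is_frame F /\ is_dual F G.

Definition probability_seq (p : 'I_N -> R) : Prop :=
  (forall i, 0 <= p i <= 1) /\ \sum_(i < N) p i = 1.

Definition weight (p : 'I_N -> R) (i : 'I_N) : R :=
  (\sum_(j < N) p j) / (\sum_(j < N) p j - p i) * ((N%:R - 1) / n%:R).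

(* error operator E_{Lambda,(F,G)} f = sum_{i in Lambda} q_i <f,f_i> g_i *)
Definition err_op (p : 'I_N -> R) (L : {set 'I_N}) (F G : 'I_N -> vec)
  : 'M[R[i]]_n :=
  \sum_(i in L) (real_complex _ (weight p i)) *: (G i *m adj (F i)).

Definition AP1 (p : 'I_N -> R) (F G : 'I_N -> vec) : R :=
  sup [set (opnorm (err_op p L F G) + specrad (err_op p L F G)) / 2
      | L in [set L : {set 'I_N} | #|L| = 1%N]].

Definition AP1_opt (p : 'I_N -> R) : R :=
  inf [set AP1 p FG.1 FG.2 | FG in [set FG : ('I_N -> vec) * ('I_N -> vec)
                                    | dual_pair FG.1 FG.2]].

Definition zetaP1 (p : 'I_N -> R) (F G : 'I_N -> vec) : Prop :=
  dual_pair F G /\ AP1 p F G = AP1_opt p.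

Definition unitary_on (U : 'M[R[i]]_n) : Prop :=
  (isreal -> forall j k, complex.Im (U j k) = 0) /\
  adj U *m U = 1%:M /\ U *m adj U = 1%:M.

End FrameDefs.

(* Main.v *)
Require Import Defs.
From HB Require Import structures.
From mathcomp Require Import all_boot all_order all_algebra.
From mathcomp Require Import classical_sets boolp reals.
From mathcomp Require Import complex.
Set Implicit Arguments. Unset Strict Implicit. Unset Printing Implicit Defensive.
Import Order.TTheory GRing.Theory Num.Theory.
Local Open Scope ring_scope.
Local Open Scope complex_scope.

Lemma adjK {R : realType} m k (A : 'M[R[i]]_(m, k)) : adj (adj A) = A.
Proof. by apply/matrixP => a b; rewrite !mxE conjcK. Qed.

Lemma adjM {R : realType} m k l (A : 'M[R[i]]_(m, k)) (B : 'M[R[i]]_(k, l)) :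
  adj (A *m B) = adj B *m adj A.
Proof.
apply/matrixP => a b; rewrite !mxE rmorph_sum; apply: eq_bigr => j _.
by rewrite !mxE rmorphM mulrC.
Qed.


Lemma dotpE {R : realType} {n : nat} (u v : vec R n) : dotp u v = (adj v *m u) 0 0.
Proof. rewrite /dotp !mxE; apply: eq_bigr => j _; by rewrite !mxE mulrC. Qed.

Lemma dotpM {R : realType} {n : nat} (A : 'M[R[i]]_n) (u v : vec R n) :
  dotp (A *m u) v = dotp u (adj A *m v).
Proof. by rewrite !dotpE adjM adjK mulmxA. Qed.

Lemma normc_sq {R : realType} (z : R[i]) : ((ComplexField.Normc.normc z) ^+ 2)%:C = z * conjc z.
Proof.
case: z => a b /=; rewrite sqr_sqrtr ?addr_ge0 ?sqr_ge0 //.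
apply/eqP; rewrite eq_complex /=; apply/andP; split; apply/eqP.
- by rewrite !expr2 mulrN opprK.
- by rewrite mulrN mulrC addNr.
Qed.

Lemma vnorm_dotp {R : realType} {n : nat} (v : vec R n) :
  ((\sum_(j < n) ComplexField.Normc.normc (v j 0) ^+ 2))%:C = dotp v v.
Proof. rewrite rmorph_sum; apply: eq_bigr => j _; exact: normc_sq. Qed.

Lemma vnormU {R : realType} {n : nat} (U : 'M[R[i]]_n) (v : vec R n) : adj U *m U = 1%:M ->
  vnorm (U *m v) = vnorm v.
Proof.
move=> hU; rewrite /vnorm; congr (Num.sqrt _); apply: complexI.
by rewrite !vnorm_dotp dotpM mulmxA hU mul1mx.
Qed.

Lemma Im_sum {R : realType} I (r : seq I) (P : pred I) (f : I -> R[i]) :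
  (forall i, P i -> complex.Im (f i) = 0) -> complex.Im (\sum_(i <- r | P i) f i) = 0.
Proof.
move=> h; elim/big_ind: _ => //.
by move=> x y; case: x => ??; case: y => ?? /= -> ->; rewrite addr0.
Qed.

Lemma Im_mul {R : realType} (x y : R[i]) : complex.Im x = 0 -> complex.Im y = 0 -> complex.Im (x * y) = 0.
Proof. by case: x => ??; case: y => ?? /= -> ->; rewrite !mulr0 mul0r addr0. Qed.

Lemma inH_mul {R : realType} {n : nat} (isreal : bool) (A : 'M[R[i]]_n) (v : vec R n) :
  (isreal -> forall j k, complex.Im (A j k) = 0) -> inH isreal v -> inH (isreal : bool) (A *m v).
Proof.
move=> hA hv r j; rewrite mxE; apply: Im_sum => k _; apply: Im_mul.
exact: hA. exact: hv.
Qed.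

Lemma adj_real {R : realType} {n : nat} (isreal : bool) (A : 'M[R[i]]_n) :
  (isreal -> forall j k, complex.Im (A j k) = 0) ->
  (isreal -> forall j k, complex.Im (adj A j k) = 0).
Proof. move=> h r j k; rewrite !mxE; move: (h r k j); case: (A k j) => ?? /= ->; exact: oppr0. Qed.



Local Close Scope complex_scope.
Local Open Scope ring_scope.
Local Open Scope classical_set_scope.

Lemma eig_conj1 {R : realType} {n : nat} (V W A : 'M[R[i]]_n) (l : R[i]) : W *m V = 1%:M -> V *m W = 1%:M ->
  eigenvalue (V *m A *m W) l -> eigenvalue A l.
Proof.
move=> hWV hVW /eigenvalueP [v hv nz]; apply/eigenvalueP; exists (v *m V).
  have e : v *m V *m A = v *m (V *m A *m W) *m V.
    rewrite !mulmxA -(mulmxA _ W V) hWV mulmx1 //.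
  by rewrite e hv -scalemxAl.
apply: contra nz => /eqP h0; apply/eqP.
have -> : v = v *m (V *m W) by rewrite hVW mulmx1.
by rewrite mulmxA h0 mul0mx.
Qed.

Lemma eig_conj {R : realType} {n : nat} (V W A : 'M[R[i]]_n) (l : R[i]) : W *m V = 1%:M -> V *m W = 1%:M ->
  eigenvalue (V *m A *m W) l = eigenvalue A l.
Proof.
move=> h1 h2; apply/idP/idP; first exact: eig_conj1.
move=> h; apply: (@eig_conj1 _ _ W V _ l h2 h1).
have -> : W *m (V *m A *m W) *m V = (W *m V) *m A *m (W *m V) by rewrite !mulmxA.
by rewrite h1 mul1mx mulmx1.
Qed.

Lemma sup_img_eq {R : realType} (P Q : R[i] -> Prop) (f : R[i] -> R) :
  (forall x, P x <-> Q x) -> sup (f @` P) = sup (f @` Q).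
Proof.
move=> h; have -> : P = Q by apply: funext => x; apply: propext.
by [].
Qed.

Lemma specrad_conj {R : realType} {n : nat} (V W A : 'M[R[i]]_n) : W *m V = 1%:M -> V *m W = 1%:M ->
  specrad (V *m A *m W) = specrad A.
Proof.
move=> h1 h2; unfold specrad. apply: sup_img_eq => l.
change (is_true (eigenvalue (V *m A *m W) l) <-> is_true (eigenvalue A l)).
rewrite (eig_conj A l h1 h2). done.
Qed.
Lemma sup_eq {R : realType} (A B : set R) : (forall r, A r <-> B r) -> sup A = sup B.
Proof. by move=> h; have -> : A = B by apply: funext => x; apply: propext. Qed.

Lemma opnorm_conj {R : realType} {n : nat} (isreal : bool) (U A : 'M[R[i]]_n) :
  (isreal -> forall j k, complex.Im (U j k) = 0) ->
  adj U *m U = 1%:M -> U *m adj U = 1%:M ->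
  opnorm isreal (U *m A *m adj U) = opnorm isreal A.
Proof.
move=> hr h1 h2; unfold opnorm; apply: sup_eq => r; split.
- case=> x [hx nx] <-; exists (adj U *m x); first split.
  + exact: inH_mul (adj_real hr) hx.
  + by rewrite (vnormU _ (_ : adj (adj U) *m adj U = 1%:M)) // adjK.
  by rewrite -!mulmxA (vnormU _ h1).
- case=> x [hx nx] <-; exists (U *m x); first split.
  + exact: inH_mul hr hx.
  + by rewrite (vnormU _ h1).
  by rewrite -!mulmxA (mulmxA (adj U)) h1 mul1mx (vnormU _ h1).
Qed.

Lemma err_conj {R : realType} {n N : nat} (p : 'I_N -> R) L (F G : 'I_N -> vec R n) (U : 'M[R[i]]_n) :
  err_op p L (fun i => U *m F i) (fun i => U *m G i) = U *m err_op p L F G *m adj U.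
Proof.
rewrite /err_op mulmx_sumr mulmx_suml; apply: eq_bigr => i _.
by rewrite adjM !mulmxA scalemxAr scalemxAl !mulmxA -!scalemxAr -!scalemxAl.
Qed.
Lemma AP1_conj {R : realType} {n N : nat} (isreal : bool) (p : 'I_N -> R) (F G : 'I_N -> vec R n) (U : 'M[R[i]]_n) :
  (isreal -> forall j k, complex.Im (U j k) = 0) ->
  adj U *m U = 1%:M -> U *m adj U = 1%:M ->
  AP1 isreal p (fun i => U *m F i) (fun i => U *m G i) = AP1 isreal p F G.
Proof.
move=> hr h1 h2; unfold AP1; apply: sup_eq => r; split; case=> L hL <-; exists L;
  (try exact: hL); by rewrite err_conj (opnorm_conj _ hr h1 h2) (specrad_conj _ h1 h2).
Qed.

Lemma h1' {R : realType} {n : nat} (U : 'M[R[i]]_n) (h2 : U *m adj U = 1%:M) : adj (adj U) *m adj U = 1%:M.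
Proof. by rewrite adjK. Qed.

Lemma dotpU {R : realType} {n : nat} (U : 'M[R[i]]_n) (f x : vec R n) : dotp f (U *m x) = dotp (adj U *m f) x.
Proof. by rewrite dotpM adjK. Qed.

Lemma frame_conj {R : realType} {n N : nat} {isreal : bool} {U : 'M[R[i]]_n} (hr : isreal -> forall j k, complex.Im (U j k) = 0) (h1 : adj U *m U = 1%:M) (h2 : U *m adj U = 1%:M) (F : 'I_N -> vec R n) : is_frame isreal F -> is_frame isreal (fun i => U *m F i).
Proof.
case=> hF [A [B [hA [hB hAB]]]]; split.
  move=> i; exact: inH_mul hr (hF i).
exists A, B; split; first exact: hA. split; first exact: hB.
move=> f hf; have := hAB (adj U *m f) (inH_mul (adj_real hr) hf).
rewrite (vnormU _ (h1' h2)).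
have -> : \sum_(i < N) ComplexField.Normc.normc (dotp f (U *m F i)) ^+ 2 =
          \sum_(i < N) ComplexField.Normc.normc (dotp (adj U *m f) (F i)) ^+ 2.
  by apply: eq_bigr => i _; rewrite dotpU.
by [].
Qed.

Lemma dual_conj {R : realType} {n N : nat} {isreal : bool} {U : 'M[R[i]]_n} (hr : isreal -> forall j k, complex.Im (U j k) = 0) (h1 : adj U *m U = 1%:M) (h2 : U *m adj U = 1%:M) (F G : 'I_N -> vec R n) : is_dual isreal F G ->
  is_dual isreal (fun i => U *m F i) (fun i => U *m G i).
Proof.
case=> hG hd; split; first exact: frame_conj.
move=> f hf; have [e1 e2] := hd (adj U *m f) (inH_mul (adj_real hr) hf).
split.
- have -> : \sum_(i < N) dotp f (U *m F i) *: (U *m G i) =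
            U *m \sum_(i < N) dotp (adj U *m f) (F i) *: G i.
    by rewrite mulmx_sumr; apply: eq_bigr => i _; rewrite dotpU scalemxAr.
  by rewrite -e1 mulmxA h2 mul1mx.
- have -> : \sum_(i < N) dotp f (U *m G i) *: (U *m F i) =
            U *m \sum_(i < N) dotp (adj U *m f) (G i) *: F i.
    by rewrite mulmx_sumr; apply: eq_bigr => i _; rewrite dotpU scalemxAr.
  by rewrite -e2 mulmxA h2 mul1mx.
Qed.

Theorem proposition4p2 (R : realType) (n N : nat) (isreal : bool)
  (p : 'I_N -> R) (F G : 'I_N -> vec R n) (U : 'M[R[i]]_n) :
  probability_seq p ->
  dual_pair isreal F G ->
  unitary_on isreal U ->
  (zetaP1 isreal p F G <->
   zetaP1 isreal p (fun i => U *m F i) (fun i => U *m G i)).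
Proof.
move=> _ [hF hD] [hr [h1 h2]].
rewrite /zetaP1 (AP1_conj _ _ _ hr h1 h2).
split; case=> _ ->; split => //; split.
- exact: frame_conj.
- exact: dual_conj.
Qed.
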